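(* With $U_0,\Omega'_0,y,\Upsilon_y,S_1,S_2$ as in the context, one has on $\mathbb{K}^E$ $$dS_1\wedge dS_2=2\sin\Upsilon_y\,e^{-4U_0}\,d\Omega'_0\wedge\star d\Omega'_0,$$ and consequently the one-form $\mathbf{T}_1=\frac{1}{2\rho}S_1\star dS_2$ satisfies $$d(\rho\star\mathbf{T}_1)+\sin\Upsilon_y\,e^{-4U_0}\,d\Omega'_0\wedge\star d\Omega'_0=0,$$ i.e. the associated axially symmetric vector field $\vec T_1=T_1^\rho\partial_\rho+T_1^z\partial_z$ satisfies $\nabla_aT_1^a=-\psi_y\,e^{-4U_0}(d\Omega'_0,d\Omega'_0)_\gamma$ on $D_0$ off the axis, where $\psi_y=1/\sqrt{\rho^2+(z-y)^2}$.
   Context: Let $\mathbb{E}^3$ have cylindrical coordinates $(\rho,z,\phi)$ and flat metric $\gamma=d\rho^2+dz^2+\rho^2d\phi^2$, with covariant derivative $\nabla$. Let $\Sigma_0$ be a $C^1$ axially symmetric surface diffeomorphic to a 2-sphere, given by $\{\rho=\rho_0(\mu),z=z_0(\mu),\phi=\varphi\}$, $\mu\in[\mu_S,\mu_N]$, with $\mu_S<\mu_N$ the only zeros of $\rho_0$ and $z_S:=z_0(\mu_S)<z_N:=z_0(\mu_N)$; $D_0$ is its unbounded exterior region. A function $f$ on $D_0$ is regular if it is $C^2$ on $D_0$, has a $C^1$ extension to $D_0\cup\Sigma_0$, and $rf$ is bounded ($r=\sqrt{\rho^2+z^2}$). $\mathbb{K}=\{(\rho,z):\rho\ge0\}$ carries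 the metric $d\rho^2+dz^2$ and Hodge star with $\star d\rho=-dz$, $\star dz=d\rho$; axially symmetric functions and one-forms $T^\rho d\rho+T^zdz$ are identified with objects on $\mathbb{K}$; $\mathbb{K}^E$ is the projection of $D_0$. $U_0$ is an axially symmetric regular flat-harmonic function on $D_0$ and $\Omega'_0$ an axially symmetric regular solution of $\triangle_\gamma\Omega'_0-4(d\Omega'_0,dU_0)_\gamma=0$. For $y\in(z_S,z_N)$: $\cos\Upsilon_y=(z-y)/\sqrt{\rho^2+(z-y)^2}$, $\sin\Upsilon_y=\rho/\sqrt{\rho^2+(z-y)^2}$; $Z_y$ is the solution of $dZ_y=\cos\Upsilon_y\,dU_0+\sin\Upsilon_y\star dU_0$ vanishing at infinity; $S_1,S_2$ are the solutions vanishing at infinity of $dS_1=e^{-2U_0+2Z_y}[-(1+\cos\Upsilon_y)d\Omega'_0-\sin\Upsilon_y\star d\Omega'_0]$ and $dS_2=e^{-2U_0-2Z_y}[(1-\cos\Upsilon_y)d\Omega'_0-\sin\Upsilon_y\star d\Omega'_0]$. *)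

(* Defs.v *)
From Stdlib Require Import Reals.
From Coquelicot Require Import Coquelicot.
Open Scope R_scope.

(* Axially symmetric objects are represented on the meridian half-plane K,
   coordinates (rho, z): a function is  u : R -> R -> R  (u rho z),
   a one-form  T^rho drho + T^z dz  is the pair of component functions,
   a two-form  f drho/\dz  is its coefficient function f. *)

Definition pd_rho (u : R -> R -> R) : R -> R -> R :=
  fun r z => Derive (fun t => u t z) r.
Definition pd_z (u : R -> R -> R) : R -> R -> R :=
  fun r z => Derive (fun t => u r t) z.

Definition C1_on (O : R -> R -> Prop) (u : R -> R -> R) : Prop :=
  forall r z, O r z ->
    ex_derive (fun t => u t z) r /\ ex_derive (fun t => u r t) z /\
    continuity_2d_pt u r z /\ continuity_2d_pt (pd_rho u) r z /\
    continuity_2d_pt (pd_z u) r z.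

Definition C2_on (O : R -> R -> Prop) (u : R -> R -> R) : Prop :=
  C1_on O u /\ C1_on O (pd_rho u) /\ C1_on O (pd_z u).

Definition form1 : Type := ((R -> R -> R) * (R -> R -> R))%type.

Definition dF (u : R -> R -> R) : form1 := (pd_rho u, pd_z u).

(* Hodge star on K with  *drho = -dz, *dz = drho :
   *(a drho + b dz) = b drho - a dz *)
Definition hodge (w : form1) : form1 :=
  (fun r z => snd w r z, fun r z => - fst w r z).

Definition fadd (w v : form1) : form1 :=
  (fun r z => fst w r z + fst v r z, fun r z => snd w r z + snd v r z).
Definition fscale (f : R -> R -> R) (w : form1) : form1 :=
  (fun r z => f r z * fst w r z, fun r z => f r z * snd w r z).

Definition wedge (w v : form1) : R -> R -> R :=
  fun r z => fst w r z * snd v r z - snd w r z * fst v r z.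

Definition dform (w : form1) : R -> R -> R :=
  fun r z => pd_rho (snd w) r z - pd_z (fst w) r z.

Definition has_differential (O : R -> R -> Prop) (u : R -> R -> R) (w : form1)
  : Prop :=
  forall r z, O r z ->
    is_derive (fun t => u t z) r (fst w r z) /\
    is_derive (fun t => u r t) z (snd w r z).

(* Generating curve mu |-> (rho0 mu, z0 mu), mu in [muS, muN], of a C^1
   axially symmetric surface diffeomorphic to S^2. *)
Definition axisym_sphere (rho0 z0 : R -> R) (muS muN : R) : Prop :=
  muS < muN /\
  rho0 muS = 0 /\ rho0 muN = 0 /\
  (forall mu, muS < mu < muN -> 0 < rho0 mu) /\
  z0 muS < z0 muN /\
  (forall mu, muS <= mu <= muN ->
     ex_derive rho0 mu /\ ex_derive z0 mu /\
     continuity_pt (Derive rho0) mu /\ continuity_pt (Derive z0) mu /\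
     (Derive rho0 mu <> 0 \/ Derive z0 mu <> 0)) /\
  Derive z0 muS = 0 /\ Derive z0 muN = 0 /\
  (forall m1 m2, muS <= m1 <= muN -> muS <= m2 <= muN ->
     rho0 m1 = rho0 m2 -> z0 m1 = z0 m2 -> m1 = m2).

Definition OnCurve (rho0 z0 : R -> R) (muS muN : R) (r z : R) : Prop :=
  exists mu, muS <= mu <= muN /\ r = rho0 mu /\ z = z0 mu.

Definition half_minus_curve rho0 z0 muS muN (r z : R) : Prop :=
  0 <= r /\ ~ OnCurve rho0 z0 muS muN r z.

(* K^E : projection of the unbounded exterior D_0, i.e. the unbounded
   connected component of {rho >= 0} minus the generating curve: points that
   can be joined, avoiding the curve, to points arbitrarily far away. *)
Definition KE rho0 z0 muS muN (r z : R) : Prop :=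
  half_minus_curve rho0 z0 muS muN r z /\
  forall M : R, exists g1 g2 : R -> R,
    (forall t, 0 <= t <= 1 -> continuity_pt g1 t /\ continuity_pt g2 t) /\
    g1 0 = r /\ g2 0 = z /\
    M < sqrt (g1 1 ^ 2 + g2 1 ^ 2) /\
    (forall t, 0 <= t <= 1 -> half_minus_curve rho0 z0 muS muN (g1 t) (g2 t)).

(* K^E off the axis (corresponds to D_0 off the axis) *)
Definition KEo rho0 z0 muS muN (r z : R) : Prop :=
  KE rho0 z0 muS muN r z /\ 0 < r.

Definition has_lim_within (O : R -> R -> Prop) (f : R -> R -> R) (r0 z0 : R)
  : Prop :=
  exists L, forall eps, 0 < eps -> exists delta, 0 < delta /\
    forall r z, O r z -> Rabs (r - r0) < delta -> Rabs (z - z0) < delta ->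
      Rabs (f r z - L) < eps.

Definition regular rho0 z0 muS muN (u : R -> R -> R) : Prop :=
  C2_on (KEo rho0 z0 muS muN) u /\
  (forall mu, muS <= mu <= muN ->
     has_lim_within (KEo rho0 z0 muS muN) u (rho0 mu) (z0 mu) /\
     has_lim_within (KEo rho0 z0 muS muN) (pd_rho u) (rho0 mu) (z0 mu) /\
     has_lim_within (KEo rho0 z0 muS muN) (pd_z u) (rho0 mu) (z0 mu)) /\
  (exists B, forall r z, KE rho0 z0 muS muN r z ->
     sqrt (r ^ 2 + z ^ 2) * Rabs (u r z) <= B).

Definition vanishes_at_infinity rho0 z0 muS muN (u : R -> R -> R) : Prop :=
  forall eps, 0 < eps -> exists M, forall r z, KE rho0 z0 muS muN r z ->
    M < sqrt (r ^ 2 + z ^ 2) -> Rabs (u r z) < eps.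

(* flat Laplacian of an axially symmetric function, in cylindrical coords *)
Definition lap (u : R -> R -> R) : R -> R -> R :=
  fun r z => pd_rho (pd_rho u) r z + / r * pd_rho u r z + pd_z (pd_z u) r z.

Definition ip (u v : R -> R -> R) : R -> R -> R :=
  fun r z => pd_rho u r z * pd_rho v r z + pd_z u r z * pd_z v r z.

Definition cosU (y : R) : R -> R -> R :=
  fun r z => (z - y) / sqrt (r ^ 2 + (z - y) ^ 2).
Definition sinU (y : R) : R -> R -> R :=
  fun r z => r / sqrt (r ^ 2 + (z - y) ^ 2).
Definition psi (y : R) : R -> R -> R :=
  fun r z => / sqrt (r ^ 2 + (z - y) ^ 2).

Definition T1 (S1 S2 : R -> R -> R) : form1 :=
  fscale (fun r z => / (2 * r) * S1 r z) (hodge (dF S2)).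

Definition rho_times (w : form1) : form1 := fscale (fun r _ => r) w.

(* flat divergence of the axisymmetric vector field T^rho d_rho + T^z d_z *)
Definition div_axi (w : form1) : R -> R -> R :=
  fun r z => / r * pd_rho (fun r' z' => r' * fst w r' z') r z + pd_z (snd w) r z.

(* Main.v *)
Require Import Defs.
From Stdlib Require Import Reals Lra.
From Coquelicot Require Import Coquelicot.
Open Scope R_scope.

Definition clip (u : R) : R := (u + Rabs u) / 2.

Lemma clip_cont : forall f x, continuity_pt f x -> continuity_pt (fun t => clip (f t)) x.
Proof.
  intros f x Hf. unfold clip.
  apply continuity_pt_div; [| apply continuity_pt_const; intros ? ?; reflexivity | lra].
  apply continuity_pt_plus; auto.
  apply (continuity_pt_comp f Rabs x Hf). apply Rcontinuity_abs.
Qed.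

Lemma clip_pos u : 0 <= u -> clip u = u.
Proof. intros; unfold clip; rewrite Rabs_pos_eq; lra. Qed.
Lemma clip_neg u : u <= 0 -> clip u = 0.
Proof. intros; unfold clip; rewrite Rabs_left1; lra. Qed.

Lemma cont_of_der f x : ex_derive f x -> continuity_pt f x.
Proof. intros H. apply continuity_pt_filterlim. apply (ex_derive_continuous f x H). Qed.

Lemma KEo_open rho0 z0 muS muN r z :
  axisym_sphere rho0 z0 muS muN -> KEo rho0 z0 muS muN r z ->
  exists d, 0 < d /\ forall r' z', Rabs (r' - r) < d -> Rabs (z' - z) < d ->
    KEo rho0 z0 muS muN r' z'.
Proof.
  intros HS [[[Hr0 Hnc] Hpath] Hr].
  destruct HS as [Hlt [_ [_ [_ [_ [Hder _]]]]]].
  set (f := fun mu => (rho0 mu - r)^2 + (z0 mu - z)^2).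
  assert (Hc : forall c, muS <= c <= muN -> continuity_pt f c).
  { intros c Hc. destruct (Hder c Hc) as [D1 [D2 _]].
    apply cont_of_der in D1. apply cont_of_der in D2. unfold f. reg. }
  destruct (continuity_ab_min f muS muN (Rlt_le _ _ Hlt) Hc) as [mx [Hmin Hmx]].
  set (m := f mx).
  assert (Hm : 0 < m).
  { unfold m, f. destruct (Rlt_or_le 0 ((rho0 mx - r) ^ 2 + (z0 mx - z) ^ 2)) as [H|H]; auto.
    exfalso. apply Hnc. exists mx. split; auto.
    assert (A1 : 0 <= (rho0 mx - r)^2) by apply pow2_ge_0.
    assert (A2 : 0 <= (z0 mx - z)^2) by apply pow2_ge_0.
    assert (B1 : Rsqr (rho0 mx - r) = 0) by (unfold Rsqr; simpl in *; lra).
    assert (B2 : Rsqr (z0 mx - z) = 0) by (unfold Rsqr; simpl in *; lra).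
    apply Rsqr_eq_0 in B1. apply Rsqr_eq_0 in B2. split; lra. }
  set (d := Rmin r (Rmin 1 (m/2))).
  assert (Hd1 : d <= r) by apply Rmin_l.
  assert (Hd2 : d <= 1) by (unfold d; eapply Rle_trans; [apply Rmin_r|apply Rmin_l]).
  assert (Hd3 : d <= m/2) by (unfold d; eapply Rle_trans; [apply Rmin_r|apply Rmin_r]).
  assert (Hd0 : 0 < d).
  { unfold d. apply Rmin_pos; auto. apply Rmin_pos; lra. }
  assert (Hbox : forall r' z', Rabs (r' - r) < d -> Rabs (z' - z) < d ->
            0 < r' /\ ~ OnCurve rho0 z0 muS muN r' z').
  { intros r' z' H1 H2. apply Rabs_def2 in H1. apply Rabs_def2 in H2.
    split; [lra|]. intros [mu [Hmu [E1 E2]]].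
    assert (Hmin' : m <= (r'-r)^2 + (z'-z)^2) by (unfold m; rewrite E1, E2; apply (Hmin mu Hmu)).
    assert ((r' - r)^2 < d*d) by nra.
    assert ((z' - z)^2 < d*d) by nra.
    assert (d*d <= 1*(m/2)) by (apply Rmult_le_compat; lra).
    lra. }
  exists d. split; auto. intros r' z' H1 H2.
  destruct (Hbox r' z' H1 H2) as [Hr' Hnc'].
  split; [|auto]. split; [split; [lra|auto]|].
  intros M. destruct (Hpath M) as [g1 [g2 [Hg [E1 [E2 [HM Hh]]]]]].
  exists (fun t => g1 (clip (2*t-1)) + clip (1-2*t) * (r' - r)).
  exists (fun t => g2 (clip (2*t-1)) + clip (1-2*t) * (z' - z)).
  assert (Hcl : forall t, 0 <= t <= 1 -> 0 <= clip (2*t-1) <= 1).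
  { intros t Ht. destruct (Rle_or_lt 0 (2*t-1)).
    - rewrite clip_pos; lra. - rewrite clip_neg; lra. }
  split; [|split; [|split; [|split]]].
  - intros t Ht. specialize (Hcl t Ht).
    assert (Cc : continuity_pt (fun t => clip (2*t-1)) t).
    { apply clip_cont. reg. }
    assert (Cc' : continuity_pt (fun t => clip (1-2*t)) t).
    { apply clip_cont. reg. }
    destruct (Hg _ Hcl) as [G1 G2].
    split; apply continuity_pt_plus;
      try (apply continuity_pt_mult; auto; apply continuity_pt_const; intros ? ?; reflexivity);
      apply (continuity_pt_comp (fun t => clip (2*t-1))); auto.
  - rewrite clip_neg by lra. rewrite clip_pos by lra.
    replace (1 - 2*0) with 1 by ring. rewrite E1. ring.
  - rewrite clip_neg by lra. rewrite clip_pos by lra.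
    replace (1 - 2*0) with 1 by ring. rewrite E2. ring.
  - rewrite (clip_neg (1-2*1)) by lra. rewrite clip_pos by lra.
    replace (2*1-1) with 1 by ring. rewrite !Rmult_0_l, !Rplus_0_r. auto.
  - intros t Ht. destruct (Rle_or_lt 0 (2*t-1)) as [H|H].
    + rewrite (clip_neg (1-2*t)) by lra. rewrite !Rmult_0_l, !Rplus_0_r.
      apply Hh. rewrite clip_pos; lra.
    + rewrite (clip_neg (2*t-1)) by lra. rewrite clip_pos by lra.
      rewrite E1, E2.
      assert (Hb: Rabs (r + (1 - 2*t)*(r'-r) - r) < d /\ Rabs (z + (1 - 2*t)*(z'-z) - z) < d).
      { apply Rabs_def2 in H1. apply Rabs_def2 in H2.
        split; apply Rabs_def1; nra. }
      destruct Hb as [B1 B2]. destruct (Hbox _ _ B1 B2). split; [lra|auto].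
Qed.

Definition G1 (y : R) (U0 Z Om : R -> R -> R) r z :=
  exp (-2 * U0 r z - 2 * Z r z) * ((1 - cosU y r z) * pd_rho Om r z + - sinU y r z * pd_z Om r z).
Definition G2 (y : R) (U0 Z Om : R -> R -> R) r z :=
  exp (-2 * U0 r z - 2 * Z r z) * ((1 - cosU y r z) * pd_z Om r z + - sinU y r z * - pd_rho Om r z).

Definition H1 (y : R) (U0 Z Om : R -> R -> R) r z :=
  exp (-2 * U0 r z + 2 * Z r z) * (- (1 + cosU y r z) * pd_rho Om r z + - sinU y r z * pd_z Om r z).
Definition H2 (y : R) (U0 Z Om : R -> R -> R) r z :=
  exp (-2 * U0 r z + 2 * Z r z) * (- (1 + cosU y r z) * pd_z Om r z + - sinU y r z * - pd_rho Om r z).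

Lemma mixed y (U0 Z Om : R -> R -> R) r z
  (Hr : 0 < r)
  (U1 : ex_derive (fun t => U0 t z) r) (U2 : ex_derive (fun t => U0 r t) z)
  (Z1 : is_derive (fun t => Z t z) r (cosU y r z * pd_rho U0 r z + sinU y r z * pd_z U0 r z))
  (Z2 : is_derive (fun t => Z r t) z (cosU y r z * pd_z U0 r z + sinU y r z * - pd_rho U0 r z))
  (A1 : ex_derive (fun t => pd_rho Om t z) r) (A2 : ex_derive (fun t => pd_rho Om r t) z)
  (B1 : ex_derive (fun t => pd_z Om t z) r) (B2 : ex_derive (fun t => pd_z Om r t) z)
  (Sch : pd_z (pd_rho Om) r z = pd_rho (pd_z Om) r z)
  (Eq : lap Om r z - 4 * ip Om U0 r z = 0) :
  exists L, is_derive (fun t => G2 y U0 Z Om t z) r L /\ is_derive (fun t => G1 y U0 Z Om r t) z L.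
Proof.
  assert (Hpos : 0 < r*(r*1)+(z-y)*((z-y)*1)).
  { rewrite !Rmult_1_r; apply Rplus_lt_le_0_compat; [apply Rmult_lt_0_compat; lra | apply Rle_0_sqr]. }
  evar (L2 : R). evar (L1 : R).
  assert (D2 : is_derive (fun t => G2 y U0 Z Om t z) r L2).
  { unfold G2, cosU, sinU. auto_derive.
    - repeat split; auto; try apply (ex_intro _ _ Z1);
      try (apply Rgt_not_eq, sqrt_lt_R0); exact Hpos.
    - unfold L2; reflexivity. }
  assert (D1 : is_derive (fun t => G1 y U0 Z Om r t) z L1).
  { unfold G1, cosU, sinU. auto_derive.
    - repeat split; auto; try apply (ex_intro _ _ Z2);
      try (apply Rgt_not_eq, sqrt_lt_R0); exact Hpos.
    - unfold L1; reflexivity. }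
  exists L2. split; auto. replace L2 with L1; auto.
  unfold L1, L2.
  assert (EZ1 : Derive (fun x : R => Z x z) r = cosU y r z * pd_rho U0 r z + sinU y r z * pd_z U0 r z) by exact (is_derive_unique _ _ _ Z1).
  assert (EZ2 : Derive (fun x : R => Z r x) z = cosU y r z * pd_z U0 r z + sinU y r z * - pd_rho U0 r z) by exact (is_derive_unique _ _ _ Z2).
  rewrite EZ1, EZ2.
  change (Derive (fun x => U0 x z) r) with (pd_rho U0 r z).
  change (Derive (fun x => U0 r x) z) with (pd_z U0 r z).
  change (Derive (fun x => pd_rho Om x z) r) with (pd_rho (pd_rho Om) r z).
  change (Derive (fun x => pd_rho Om r x) z) with (pd_z (pd_rho Om) r z).
  change (Derive (fun x => pd_z Om x z) r) with (pd_rho (pd_z Om) r z).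
  change (Derive (fun x => pd_z Om r x) z) with (pd_z (pd_z Om) r z).
  unfold lap, ip, cosU, sinU in *.
  rewrite Sch.
  replace (z + - y) with (z - y) by ring.
  replace (r * (r * 1) + (z - y) * ((z - y) * 1)) with (r^2 + (z-y)^2) by ring.
  assert (HQ : sqrt (r^2 + (z-y)^2) * sqrt (r^2 + (z-y)^2) = r^2 + (z-y)^2).
  { apply sqrt_sqrt. nra. }
  assert (HQ0 : 0 < sqrt (r^2 + (z-y)^2)) by (apply sqrt_lt_R0; nra).
  clear - HQ HQ0 Eq Hr.
  set (Q := sqrt (r^2 + (z-y)^2)) in *.
  set (E := exp (-2 * U0 r z + - (2 * Z r z))).
  set (a := pd_rho Om r z) in *. set (b := pd_z Om r z) in *.
  set (ar := pd_rho (pd_rho Om) r z) in *. set (br := pd_rho (pd_z Om) r z) in *.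
  set (bz := pd_z (pd_z Om) r z) in *.
  set (Ur := pd_rho U0 r z) in *. set (Uz := pd_z U0 r z) in *.
  clearbody Q E a b ar br bz Ur Uz.
  assert (Hbz : bz = 4 * (a * Ur + b * Uz) - ar - a / r) by (unfold Rdiv; lra).
  subst bz.
  apply Rminus_diag_uniq.
  apply (eq_trans (y := E * (- a / (Q*Q*Q) - 2 * (a * Uz - b * Ur) / (Q*Q)) * (Q*Q - (r^2 + (z-y)^2)))).
  - field. split; lra.
  - rewrite HQ. ring.
Qed.

Lemma deriv_prod_c (c : R) (f g : R -> R) x df dg :
  is_derive f x df -> is_derive g x dg ->
  is_derive (fun t => c * (f t * g t)) x (c * (df * g x + f x * dg)).
Proof.
  intros Hf Hg. apply is_derive_scal.
  apply (is_derive_mult f g x df dg Hf Hg). intros; apply Rmult_comm.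
Qed.

Lemma loc_box r d (Hd : 0 < d) (P : R -> Prop) :
  (forall t, Rabs (t - r) < d -> P t) -> locally r P.
Proof.
  intros H. exists (mkposreal d Hd). intros t Ht. apply H.
  change (Rabs (t - r) < d) in Ht. exact Ht.
Qed.

Theorem mainTheorem6
  (rho0 z0 : R -> R) (muS muN : R)
  (U0 Om : R -> R -> R) (y : R) (Z S1 S2 : R -> R -> R)
  (HSigma : axisym_sphere rho0 z0 muS muN)
  (HU0reg : regular rho0 z0 muS muN U0)
  (HU0harm : forall r z, KEo rho0 z0 muS muN r z -> lap U0 r z = 0)
  (HOmreg : regular rho0 z0 muS muN Om)
  (HOmeq : forall r z, KEo rho0 z0 muS muN r z ->
             lap Om r z - 4 * ip Om U0 r z = 0)
  (Hy : z0 muS < y < z0 muN)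
  (HZ : has_differential (KEo rho0 z0 muS muN) Z
          (fadd (fscale (cosU y) (dF U0)) (fscale (sinU y) (hodge (dF U0)))))
  (HZinf : vanishes_at_infinity rho0 z0 muS muN Z)
  (HS1 : has_differential (KEo rho0 z0 muS muN) S1
          (fscale (fun r z => exp (-2 * U0 r z + 2 * Z r z))
             (fadd (fscale (fun r z => - (1 + cosU y r z)) (dF Om))
                   (fscale (fun r z => - sinU y r z) (hodge (dF Om))))))
  (HS1inf : vanishes_at_infinity rho0 z0 muS muN S1)
  (HS2 : has_differential (KEo rho0 z0 muS muN) S2
          (fscale (fun r z => exp (-2 * U0 r z - 2 * Z r z))
             (fadd (fscale (fun r z => 1 - cosU y r z) (dF Om))
                   (fscale (fun r z => - sinU y r z) (hodge (dF Om))))))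
  (HS2inf : vanishes_at_infinity rho0 z0 muS muN S2) :
  (forall r z, KEo rho0 z0 muS muN r z ->
     wedge (dF S1) (dF S2) r z =
     2 * sinU y r z * exp (-4 * U0 r z) * wedge (dF Om) (hodge (dF Om)) r z) /\
  (forall r z, KEo rho0 z0 muS muN r z ->
     dform (hodge (rho_times (T1 S1 S2))) r z
     + sinU y r z * exp (-4 * U0 r z) * wedge (dF Om) (hodge (dF Om)) r z = 0) /\
  (forall r z, KEo rho0 z0 muS muN r z ->
     div_axi (T1 S1 S2) r z = - psi y r z * exp (-4 * U0 r z) * ip Om Om r z).
Proof.
  set (K := KEo rho0 z0 muS muN).
  assert (S2e : forall r z, K r z -> pd_rho S2 r z = G1 y U0 Z Om r z /\ pd_z S2 r z = G2 y U0 Z Om r z).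
  { intros r z Hp. destruct (HS2 r z Hp) as [P1 P2].
    apply is_derive_unique in P1. apply is_derive_unique in P2. split; [exact P1 | exact P2]. }
  assert (S1e : forall r z, K r z -> pd_rho S1 r z = H1 y U0 Z Om r z /\ pd_z S1 r z = H2 y U0 Z Om r z).
  { intros r z Hp. destruct (HS1 r z Hp) as [P1 P2].
    apply is_derive_unique in P1. apply is_derive_unique in P2. split; [exact P1 | exact P2]. }
  assert (P1 : forall r z, K r z ->
     wedge (dF S1) (dF S2) r z =
     2 * sinU y r z * exp (-4 * U0 r z) * wedge (dF Om) (hodge (dF Om)) r z).
  { intros r z Hp. destruct (S1e r z Hp) as [Q1 Q2].
    destruct (S2e r z Hp) as [R1 R2].
    unfold wedge, dF, hodge. cbn [fst snd].
    rewrite Q1, Q2, R1, R2. unfold G1, G2, H1, H2.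
    assert (Hexp : exp (-2 * U0 r z + 2 * Z r z) * exp (-2 * U0 r z - 2 * Z r z) = exp (-4 * U0 r z)).
    { rewrite <- exp_plus. f_equal. ring. }
    rewrite <- Hexp. ring. }
  assert (Key : forall r z, K r z -> exists d L, 0 < d /\
     (forall r' z', Rabs (r' - r) < d -> Rabs (z' - z) < d -> K r' z') /\
     is_derive (fun t => G2 y U0 Z Om t z) r L /\ is_derive (fun t => G1 y U0 Z Om r t) z L).
  { intros r z Hp.
    destruct (KEo_open _ _ _ _ r z HSigma Hp) as [d [Hd Hbox]].
    destruct HU0reg as [[CU _] _]. destruct HOmreg as [[CO [CA CB]] _].
    destruct (CU r z Hp) as [U1 [U2 _]].
    destruct (CA r z Hp) as [A1 [A2 _]].
    destruct (CB r z Hp) as [B1 [B2 _]].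
    destruct (HZ r z Hp) as [Z1 Z2].
    assert (Sch : pd_z (pd_rho Om) r z = pd_rho (pd_z Om) r z).
    { symmetry. apply (Schwarz Om r z).
      - exists (mkposreal d Hd). intros u v Hu Hv. simpl in Hu, Hv.
        assert (Hq : K u v) by (apply Hbox; auto).
        destruct (CO u v Hq) as [O1 [O2 _]].
        destruct (CA u v Hq) as [A1' [A2' _]].
        destruct (CB u v Hq) as [B1' [B2' _]].
        repeat split; auto.
      - destruct (CB r z Hp) as [_ [_ [_ [C _]]]]. exact C.
      - destruct (CA r z Hp) as [_ [_ [_ [_ C]]]]. exact C. }
    destruct (mixed y U0 Z Om r z (proj2 Hp) U1 U2 Z1 Z2 A1 A2 B1 B2 Sch (HOmeq r z Hp)) as [L [D1 D2]].
    exists d, L. exact (conj Hd (conj Hbox (conj D1 D2))). }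
  split; [exact P1|]. split.
  - intros r z Hp.
    destruct (Key r z Hp) as [d [L [Hd [Hbox [D2 D1]]]]].
    destruct (HS1 r z Hp) as [Q1 Q2].
    destruct (S2e r z Hp) as [R1 R2].
    assert (Hr : 0 < r) by exact (proj2 Hp).
    pose proof (deriv_prod_c (-(1/2)) (fun t => S1 t z) (fun t => G2 y U0 Z Om t z) r _ _ Q1 D2) as E1.
    pose proof (deriv_prod_c (r * (/ (2*r))) (fun t => S1 r t) (fun t => - G1 y U0 Z Om r t) z _ _ Q2 (is_derive_opp _ _ _ D1)) as E2.
    unfold dform.
    assert (F1 : pd_rho (snd (hodge (rho_times (T1 S1 S2)))) r z =
       -(1/2) * (H1 y U0 Z Om r z * G2 y U0 Z Om r z + S1 r z * L)).
    { unfold pd_rho. apply is_derive_unique.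
      eapply is_derive_ext_loc; [|exact E1].
      apply (loc_box r d Hd). intros t Ht.
      assert (Kt : K t z) by (apply Hbox; auto; rewrite Rminus_diag, Rabs_R0; auto).
      destruct (S2e t z Kt) as [_ R2t]. simpl. rewrite R2t.
      assert (0 < t) by exact (proj2 Kt). field. lra. }
    assert (F2 : pd_z (fst (hodge (rho_times (T1 S1 S2)))) r z =
       r * / (2 * r) * (H2 y U0 Z Om r z * - G1 y U0 Z Om r z + S1 r z * - L)).
    { unfold pd_z. apply is_derive_unique.
      eapply is_derive_ext_loc; [|exact E2].
      apply (loc_box z d Hd). intros t Ht.
      assert (Kt : K r t) by (apply Hbox; auto; rewrite Rminus_diag, Rabs_R0; auto).
      destruct (S2e r t Kt) as [R1t _]. simpl. rewrite R1t. ring. }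
    change (pd_rho (snd (hodge (rho_times (T1 S1 S2)))) r z -
      pd_z (fst (hodge (rho_times (T1 S1 S2)))) r z +
      sinU y r z * exp (-4 * U0 r z) * wedge (dF Om) (hodge (dF Om)) r z = 0).
    rewrite F1, F2.
    assert (W := P1 r z Hp).
    set (Wom := wedge (dF Om) (hodge (dF Om)) r z) in *. clearbody Wom.
    unfold wedge, dF in W. cbn [fst snd] in W.
    destruct (S1e r z Hp) as [T1e T2e]. rewrite T1e, T2e, R1, R2 in W.
    assert (Hr2 : r * / (2 * r) = 1/2) by (field; lra).
    rewrite Hr2.
    assert (Hw : sinU y r z * exp (-4 * U0 r z) * Wom = 1/2 * (H1 y U0 Z Om r z * G2 y U0 Z Om r z - H2 y U0 Z Om r z * G1 y U0 Z Om r z)) by (rewrite W; field).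
    rewrite Hw. field.
  - intros r z Hp.
    destruct (Key r z Hp) as [d [L [Hd [Hbox [D2 D1]]]]].
    destruct (HS1 r z Hp) as [Q1 Q2].
    destruct (S2e r z Hp) as [R1 R2].
    assert (Hr : 0 < r) by exact (proj2 Hp).
    pose proof (deriv_prod_c (1/2) (fun t => S1 t z) (fun t => G2 y U0 Z Om t z) r _ _ Q1 D2) as E1.
    pose proof (deriv_prod_c (/ (2*r)) (fun t => S1 r t) (fun t => - G1 y U0 Z Om r t) z _ _ Q2 (is_derive_opp _ _ _ D1)) as E2.
    assert (F1 : pd_rho (fun r' z' => r' * fst (T1 S1 S2) r' z') r z =
       (1/2) * (H1 y U0 Z Om r z * G2 y U0 Z Om r z + S1 r z * L)).
    { unfold pd_rho at 1. apply is_derive_unique.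
      eapply is_derive_ext_loc; [|exact E1].
      apply (loc_box r d Hd). intros t Ht.
      assert (Kt : K t z) by (apply Hbox; auto; rewrite Rminus_diag, Rabs_R0; auto).
      destruct (S2e t z Kt) as [_ R2t]. simpl. rewrite R2t.
      assert (0 < t) by exact (proj2 Kt). field. lra. }
    assert (F2 : pd_z (snd (T1 S1 S2)) r z =
       / (2 * r) * (H2 y U0 Z Om r z * - G1 y U0 Z Om r z + S1 r z * - L)).
    { unfold pd_z. apply is_derive_unique.
      eapply is_derive_ext_loc; [|exact E2].
      apply (loc_box z d Hd). intros t Ht.
      assert (Kt : K r t) by (apply Hbox; auto; rewrite Rminus_diag, Rabs_R0; auto).
      destruct (S2e r t Kt) as [R1t _]. simpl. rewrite R1t. ring. }
    unfold div_axi. rewrite F1, F2.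
    assert (W := P1 r z Hp). unfold wedge in W. unfold dF, hodge in W. cbn [fst snd] in W.
    destruct (S1e r z Hp) as [T1e T2e]. rewrite T1e, T2e, R1, R2 in W.
    unfold ip, psi. unfold sinU in W.
    assert (HQ0 : 0 < sqrt (r ^ 2 + (z - y) ^ 2)).
    { apply sqrt_lt_R0. apply Rplus_lt_le_0_compat; [apply pow_lt; lra | apply pow2_ge_0]. }
    apply (Rmult_eq_reg_l (2 * r)); [|lra].
    replace (2 * r * (/ r * (1 / 2 * (H1 y U0 Z Om r z * G2 y U0 Z Om r z + S1 r z * L)) +
       / (2 * r) * (H2 y U0 Z Om r z * - G1 y U0 Z Om r z + S1 r z * - L)))
      with (H1 y U0 Z Om r z * G2 y U0 Z Om r z - H2 y U0 Z Om r z * G1 y U0 Z Om r z) by (field; lra).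
    rewrite W. field. lra.
Qed.
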